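(* There exist a locally finite semilattice $T$ and a submultiplicative weight $\omega$ on $T$ such that $\ell^1_\omega(T)$ is not AMNM.
   Context: A semilattice is a commutative semigroup in which every element is idempotent; it is locally finite if every finitely generated subsemigroup is finite. A weight on $T$ is a function $\omega:T\to(0,\infty)$; it is submultiplicative if $\omega(xy)\le\omega(x)\omega(y)$ for all $x,y$. $\ell^1_\omega(T)$ is the Banach space of $a:T\to\mathbb C$ with $\|a\|=\sum_{t}|a(t)|\omega(t)<\infty$, a Banach algebra under convolution ($\delta_x*\delta_y=\delta_{xy}$). For a bounded linear map $T:A\to B$ between Banach algebras, $\operatorname{def}(T)=\sup\{\|T(xy)-T(x)T(y)\|:\|x\|,\|y\|\le1\}$; $\operatorname{Mult}(A,B)$ is the set of bounded linear multiplicative maps $A\to B$ (including $0$). A Banach algebra $A$ is AMNM if for every $\varepsilon>0$ there is $\delta>0$ such that every $\psi\in A^*$ with $\operatorname{def}(\psi)\le\delta$ satisfies $\operatorname{dist}_{A^*}(\psi,\operatorname{Mult}(A,\mathbb C))\le\varepsilon$. *)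

(* Defs.v *)
From Stdlib Require Import Reals List.
Import ListNotations.
Open Scope R_scope.

Definition C : Type := (R * R)%type.
Definition C0 : C := (0, 0).
Definition Cadd (z w : C) : C := (fst z + fst w, snd z + snd w).
Definition Copp (z : C) : C := (- fst z, - snd z).
Definition Csub (z w : C) : C := Cadd z (Copp w).
Definition Cmul (z w : C) : C :=
  (fst z * fst w - snd z * snd w, fst z * snd w + snd z * fst w).
Definition Cnorm (z : C) : R := sqrt (fst z * fst z + snd z * snd z).

Definition Csum {I : Type} (f : I -> C) (L : list I) : C :=
  fold_right (fun i acc => Cadd (f i) acc) C0 L.

(* unordered (net) sum over an arbitrary index type: the finite partial sums
   over finite sets containing L0 converge to s *)
Definition has_sum {I : Type} (f : I -> C) (s : C) : Prop :=
  forall eps, 0 < eps -> exists L0 : list I,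
    forall L : list I, NoDup L -> incl L0 L -> Cnorm (Csub (Csum f L) s) < eps.

Definition is_semilattice {T : Type} (op : T -> T -> T) : Prop :=
  (forall x y z, op x (op y z) = op (op x y) z) /\
  (forall x y, op x y = op y x) /\
  (forall x, op x x = x).

Inductive generated {T : Type} (op : T -> T -> T) (L : list T) : T -> Prop :=
| gen_base : forall t, In t L -> generated op L t
| gen_op : forall x y, generated op L x -> generated op L y ->
           generated op L (op x y).

Definition locally_finite {T : Type} (op : T -> T -> T) : Prop :=
  forall L : list T, exists M : list T, forall t, generated op L t -> In t M.

Definition is_weight {T : Type} (w : T -> R) : Prop := forall t, 0 < w t.
Definition submultiplicative {T : Type} (op : T -> T -> T) (w : T -> R) : Prop :=
  forall x y, w (op x y) <= w x * w y.

Definition wsum {T : Type} (w : T -> R) (a : T -> C) (L : list T) : R :=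
  fold_right (fun t acc => Cnorm (a t) * w t + acc) 0 L.

(* ||a|| <= r, i.e. sup over finite subsets of the weighted sums is <= r *)
Definition norm_le {T : Type} (w : T -> R) (a : T -> C) (r : R) : Prop :=
  forall L : list T, NoDup L -> wsum w a L <= r.

Definition in_l1w {T : Type} (w : T -> R) (a : T -> C) : Prop :=
  exists r, norm_le w a r.

Definition fadd {T : Type} (a b : T -> C) : T -> C := fun t => Cadd (a t) (b t).
Definition fscale {T : Type} (l : C) (a : T -> C) : T -> C := fun t => Cmul l (a t).

(* c = a * b (convolution): c(t) = sum_{x y = t} a(x) b(y) *)
Definition conv_rel {T : Type} (op : T -> T -> T) (a b c : T -> C) : Prop :=
  forall t, has_sum (fun p : {p : T * T | op (fst p) (snd p) = t} =>
                       Cmul (a (fst (proj1_sig p))) (b (snd (proj1_sig p))))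
                    (c t).

Definition is_bdd_linear {T : Type} (w : T -> R) (psi : (T -> C) -> C) : Prop :=
  (forall a b, in_l1w w a -> in_l1w w b -> psi (fadd a b) = Cadd (psi a) (psi b)) /\
  (forall l a, in_l1w w a -> psi (fscale l a) = Cmul l (psi a)) /\
  (exists M, forall a r, in_l1w w a -> norm_le w a r -> Cnorm (psi a) <= M * r).

Definition defect_le {T : Type} (op : T -> T -> T) (w : T -> R)
  (psi : (T -> C) -> C) (d : R) : Prop :=
  forall a b c, in_l1w w a -> in_l1w w b -> norm_le w a 1 -> norm_le w b 1 ->
    conv_rel op a b c -> Cnorm (Csub (psi c) (Cmul (psi a) (psi b))) <= d.

(* phi in Mult(A, C) (bounded, linear, multiplicative; includes 0) *)
Definition is_mult {T : Type} (op : T -> T -> T) (w : T -> R)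
  (phi : (T -> C) -> C) : Prop :=
  is_bdd_linear w phi /\
  forall a b c, in_l1w w a -> in_l1w w b -> conv_rel op a b c ->
    phi c = Cmul (phi a) (phi b).

Definition opnorm_diff_le {T : Type} (w : T -> R) (psi phi : (T -> C) -> C)
  (e : R) : Prop :=
  forall a, in_l1w w a -> norm_le w a 1 -> Cnorm (Csub (psi a) (phi a)) <= e.

(* dist_{A*}(psi, Mult(A,C)) <= e  (infimum <= e) *)
Definition dist_mult_le {T : Type} (op : T -> T -> T) (w : T -> R)
  (psi : (T -> C) -> C) (e : R) : Prop :=
  forall eta, 0 < eta -> exists phi, is_mult op w phi /\
    opnorm_diff_le w psi phi (e + eta).

Definition AMNM {T : Type} (op : T -> T -> T) (w : T -> R) : Prop :=
  forall eps, 0 < eps -> exists delta, 0 < delta /\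
    forall psi, is_bdd_linear w psi -> defect_le op w psi delta ->
      dist_mult_le op w psi eps.

(* Main.v *)
Require Import Defs.
From Stdlib Require Import Reals List.
From Stdlib Require Import Lra Lia ProofIrrelevance Classical.
From Coquelicot Require Complex.
Import ListNotations.
Open Scope R_scope.
Local Notation CC := Defs.C.


Lemma Cnorm_Cmod z : Cnorm z = Complex.Cmod z.
Proof. unfold Cnorm, Complex.Cmod. f_equal. simpl. ring. Qed.

Lemma Cnorm_tri z u : Cnorm (Cadd z u) <= Cnorm z + Cnorm u.
Proof. rewrite !Cnorm_Cmod. apply Complex.Cmod_triangle. Qed.

Lemma Cnorm_mul z u : Cnorm (Cmul z u) = Cnorm z * Cnorm u.
Proof. rewrite !Cnorm_Cmod. apply Complex.Cmod_mult. Qed.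

Lemma Cnorm_ge0 z : 0 <= Cnorm z.
Proof. unfold Cnorm. apply sqrt_pos. Qed.

Lemma Cnorm_real r : Cnorm (r, 0) = Rabs r.
Proof. unfold Cnorm; simpl. replace (r*r+0*0) with (r*r) by ring. apply sqrt_Rsqr_abs. Qed.

Lemma Cnorm_zero_eq z u : Cnorm (Csub z u) = 0 -> z = u.
Proof.
  destruct z as [a b], u as [c d]; unfold Cnorm, Csub, Cadd, Copp; simpl.
  set (x := a + - c) in *. set (y := b + - d) in *.
  pose proof (Rle_0_sqr x); pose proof (Rle_0_sqr y); unfold Rsqr in *.
  intro Hs. apply sqrt_eq_0 in Hs; [|lra].
  assert (Hx : x * x = 0) by lra. assert (Hy : y * y = 0) by lra.
  apply Rmult_integral in Hx. apply Rmult_integral in Hy.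
  f_equal; unfold x, y in *; lra.
Qed.

Ltac cring := unfold Cadd, Cmul, Csub, Copp, C0; apply injective_projections; simpl; ring.

Section Sums.
Context {I : Type}.

Lemma Csum_cons (f : I -> CC) x L : Csum f (x :: L) = Cadd (f x) (Csum f L).
Proof. reflexivity. Qed.

Lemma Csum_app (f : I -> CC) L1 L2 : Csum f (L1 ++ L2) = Cadd (Csum f L1) (Csum f L2).
Proof. induction L1; simpl. - cring. - rewrite IHL1. cring. Qed.

Lemma Csum_ext (f g : I -> CC) L : (forall x, In x L -> f x = g x) -> Csum f L = Csum g L.
Proof. induction L; simpl; intros H; auto. rewrite H, IHL; auto. Qed.

Lemma Csum_add (f g : I -> CC) L : Csum (fun x => Cadd (f x) (g x)) L = Cadd (Csum f L) (Csum g L).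
Proof. induction L; simpl. - cring. - rewrite IHL. cring. Qed.

Lemma Csum_sub (f g : I -> CC) L : Csum (fun x => Csub (f x) (g x)) L = Csub (Csum f L) (Csum g L).
Proof. induction L; simpl. - cring. - rewrite IHL. cring. Qed.

Lemma Csum_scale (z : CC) (f : I -> CC) L : Csum (fun x => Cmul z (f x)) L = Cmul z (Csum f L).
Proof. induction L; simpl. - cring. - rewrite IHL. cring. Qed.

Lemma Csum_zero (f : I -> CC) L : (forall x, In x L -> f x = C0) -> Csum f L = C0.
Proof. induction L; simpl; intros H; auto. rewrite H, IHL; auto. cring. Qed.

Lemma Csum_single (f : I -> CC) L s : NoDup L -> In s L -> (forall x, In x L -> x <> s -> f x = C0) ->
  Csum f L = f s.
Proof.
  induction L as [|a L IH]; simpl; intros HN Hin H; [contradiction|].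
  inversion HN; subst. destruct Hin as [<-|Hin].
  - rewrite Csum_zero. cring. intros x Hx. apply H; auto. intro; subst; contradiction.
  - rewrite H; auto. rewrite IH; auto. cring. intro; subst; contradiction.
Qed.

Definition rsum (f : I -> R) (L : list I) : R := fold_right (fun x acc => f x + acc) 0 L.

Lemma rsum_le (f g : I -> R) L : (forall x, In x L -> f x <= g x) -> rsum f L <= rsum g L.
Proof. induction L; simpl; intros H. lra. pose proof (H a (or_introl eq_refl)). pose proof (IHL (fun x h => H x (or_intror h))). lra. Qed.

Lemma rsum_ge0 (f : I -> R) L : (forall x, In x L -> 0 <= f x) -> 0 <= rsum f L.
Proof. induction L; simpl; intros H. lra. pose proof (H a (or_introl eq_refl)). pose proof (IHL (fun x h => H x (or_intror h))). lra. Qed.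

Lemma rsum_app (f : I -> R) L1 L2 : rsum f (L1 ++ L2) = rsum f L1 + rsum f L2.
Proof. induction L1; simpl; lra. Qed.

Lemma rsum_scale c (f : I -> R) L : rsum (fun x => c * f x) L = c * rsum f L.
Proof. induction L; simpl; lra. Qed.

Lemma Cnorm_Csum (f : I -> CC) L : Cnorm (Csum f L) <= rsum (fun x => Cnorm (f x)) L.
Proof.
  induction L; simpl.
  - unfold C0, Cnorm; simpl. replace (0*0+0*0) with 0 by ring. rewrite sqrt_0; lra.
  - eapply Rle_trans. apply Cnorm_tri. lra.
Qed.

Lemma has_sum_finite (f : I -> CC) s L : NoDup L -> (forall x, In x L) -> has_sum f s -> Csum f L = s.
Proof.
  intros HN Hall Hs. apply Cnorm_zero_eq.
  destruct (Rle_lt_dec (Cnorm (Csub (Csum f L) s)) 0) as [Hle|Hlt].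
  - pose proof (Cnorm_ge0 (Csub (Csum f L) s)); lra.
  - destruct (Hs _ Hlt) as [L0 HL0]. specialize (HL0 L HN (fun x _ => Hall x)). lra.
Qed.
End Sums.

Lemma Csum_map {I J} (f : J -> CC) (g : I -> J) L : Csum f (map g L) = Csum (fun x => f (g x)) L.
Proof. induction L; simpl; auto. rewrite IHL; auto. Qed.
Lemma rsum_map {I J} (f : J -> R) (g : I -> J) L : rsum f (map g L) = rsum (fun x => f (g x)) L.
Proof. induction L; simpl; auto. rewrite IHL; auto. Qed.

Lemma Csum_prod {I J} (f : I -> CC) (g : J -> CC) X Y :
  Cmul (Csum f X) (Csum g Y) = Csum (fun p => Cmul (f (fst p)) (g (snd p))) (list_prod X Y).
Proof.
  induction X; simpl. - cring.
  - rewrite Csum_app, <- IHX, Csum_map. simpl. rewrite Csum_scale. cring.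
Qed.

Lemma rsum_prod {I J} (f : I -> R) (g : J -> R) X Y :
  rsum f X * rsum g Y = rsum (fun p => f (fst p) * g (snd p)) (list_prod X Y).
Proof.
  induction X; simpl. - ring.
  - rewrite rsum_app, <- IHX, rsum_map. simpl. rewrite rsum_scale. ring.
Qed.

Lemma Csum_swap {I J} (f : I -> J -> CC) X Y :
  Csum (fun x => Csum (fun y => f x y) Y) X = Csum (fun y => Csum (fun x => f x y) X) Y.
Proof.
  induction X; simpl.
  - rewrite Csum_zero; auto.
  - rewrite IHX, <- Csum_add. auto.
Qed.

Lemma NoDup_map_inj {I J} (f : I -> J) L : (forall a b, f a = f b -> a = b) -> NoDup L -> NoDup (map f L).
Proof.
  intros Hf; induction 1; simpl; constructor; auto.
  intro H1. apply in_map_iff in H1 as [y [Hy Hy']]. apply Hf in Hy; subst; contradiction.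
Qed.

Lemma NoDup_prod {I J} (X : list I) (Y : list J) : NoDup X -> NoDup Y -> NoDup (list_prod X Y).
Proof.
  induction 1 as [|x X Hx HX IH]; simpl; intros HY. constructor.
  apply NoDup_app; auto.
  - apply NoDup_map_inj; auto. intros a b H; inversion H; auto.
  - intros [u v] H1 H2. apply in_map_iff in H1 as [y [Hy _]]. inversion Hy; subst.
    apply in_prod_iff in H2 as [H2 _]. contradiction.
Qed.


Definition T := option (list bool).

Fixpoint orl (l l' : list bool) : list bool :=
  match l, l' with b :: l1, b' :: l1' => orb b b' :: orl l1 l1' | _, _ => [] end.

Definition op (x y : T) : T :=
  match x, y with
  | Some l, Some l' => if Nat.eqb (length l) (length l') then Some (orl l l') else None
  | _, _ => None end.

Fixpoint cnt (l : list bool) : nat := match l with [] => 0%nat | b :: l => ((if b then 1 else 0) + cnt l)%nat end.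
Fixpoint allt (l : list bool) : bool := match l with [] => true | b :: l => andb b (allt l) end.

Definition w (x : T) : R :=
  match x with None => 1 | Some l => if allt l then 1 else 1 + INR (cnt l) end.

Lemma orl_len l l' : length l = length l' -> length (orl l l') = length l.
Proof. revert l'; induction l; destruct l'; simpl; intros; auto; discriminate. Qed.
Lemma orl_comm l l' : orl l l' = orl l' l.
Proof. revert l'; induction l; destruct l'; simpl; auto. rewrite IHl, Bool.orb_comm; auto. Qed.
Lemma orl_idem l : orl l l = l.
Proof. induction l; simpl; auto. rewrite IHl, Bool.orb_diag; auto. Qed.
Lemma orl_assoc l1 l2 l3 : orl l1 (orl l2 l3) = orl (orl l1 l2) l3.
Proof. revert l2 l3; induction l1; destruct l2, l3; simpl; auto. rewrite IHl1, Bool.orb_assoc; auto. Qed.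

Lemma T_dec (x y : T) : {x = y} + {x <> y}.
Proof. decide equality. apply list_eq_dec, Bool.bool_dec. Qed.

Lemma op_assoc x y z : op x (op y z) = op (op x y) z.
Proof.
  destruct x as [a|], y as [b|], z as [c|]; simpl; auto.
  - destruct (Nat.eqb_spec (length b) (length c)); destruct (Nat.eqb_spec (length a) (length b));
    simpl; auto.
    + rewrite orl_len by auto. rewrite orl_len by auto.
      destruct (Nat.eqb_spec (length a) (length b)); [|contradiction].
      destruct (Nat.eqb_spec (length a) (length c)); [|lia]. rewrite orl_assoc; auto.
    + rewrite orl_len by auto. destruct (Nat.eqb_spec (length a) (length b)); [contradiction|auto].
    + rewrite orl_len by auto. destruct (Nat.eqb_spec (length a) (length c)); [lia|auto].
  all: try (destruct (Nat.eqb (length a) (length b)); auto).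
  all: try (destruct (Nat.eqb (length b) (length c)); auto).
Qed.

Lemma op_comm x y : op x y = op y x.
Proof.
  destruct x as [a|], y as [b|]; simpl; auto.
  rewrite Nat.eqb_sym. destruct (Nat.eqb (length b) (length a)); auto. rewrite orl_comm; auto.
Qed.

Lemma op_idem x : op x x = x.
Proof. destruct x as [a|]; simpl; auto. rewrite Nat.eqb_refl, orl_idem; auto. Qed.

Fixpoint all_lists (n : nat) : list (list bool) :=
  match n with 0 => [[]] | S n => map (cons true) (all_lists n) ++ map (cons false) (all_lists n) end.

Lemma all_lists_in n l : length l = n -> In l (all_lists n).
Proof.
  revert l; induction n; destruct l; simpl; intros H; try discriminate; auto.
  apply in_or_app. destruct b; [left|right]; apply in_map; auto.
Qed.

Lemma all_lists_len n l : In l (all_lists n) -> length l = n.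
Proof.
  revert l; induction n; simpl; intros l H. destruct H as [<-|[]]; auto.
  apply in_app_or in H as [H|H]; apply in_map_iff in H as [l' [<- H]]; simpl; f_equal; auto.
Qed.

Lemma all_lists_nodup n : NoDup (all_lists n).
Proof.
  induction n; simpl. repeat constructor; auto.
  apply NoDup_app; try (apply NoDup_map_inj; auto; intros a b H; inversion H; auto).
  intros a H1 H2. apply in_map_iff in H1 as [x [<- _]]. apply in_map_iff in H2 as [y [Hy _]]. discriminate.
Qed.

Definition len (x : T) : nat := match x with None => 0%nat | Some l => length l end.

Lemma op_len x y : (len (op x y) <= Nat.max (len x) (len y))%nat.
Proof.
  destruct x as [a|], y as [b|]; simpl; try lia.
  destruct (Nat.eqb_spec (length a) (length b)); simpl; try lia. rewrite orl_len; lia.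
Qed.

Lemma locfin : locally_finite op.
Proof.
  intros L. set (K := fold_right (fun x acc => Nat.max (len x) acc) 0%nat L).
  exists (None :: flat_map (fun n => map Some (all_lists n)) (seq 0 (S K))).
  assert (HK : forall t, generated op L t -> (len t <= K)%nat).
  { induction 1.
    - unfold K. clear K. induction L; simpl in *; [contradiction|]. destruct H; subst; try lia.
      specialize (IHL H); lia.
    - pose proof (op_len x y); lia. }
  intros t Ht. specialize (HK t Ht). destruct t as [l|]; [right|left; auto].
  apply in_flat_map. exists (length l). split. apply in_seq. simpl in HK; lia.
  apply in_map, all_lists_in; auto.
Qed.

Lemma w_ge1 x : 1 <= w x.
Proof. destruct x as [l|]; simpl; try lra. destruct (allt l); try lra. pose proof (pos_INR (cnt l)); lra. Qed.

Lemma cnt_orl l l' : (cnt (orl l l') <= cnt l + cnt l')%nat.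
Proof. revert l'; induction l; destruct l'; simpl; try lia. specialize (IHl l'). destruct a, b; simpl; lia. Qed.

Lemma allt_orl l l' : length l = length l' -> allt l = true -> allt (orl l l') = true.
Proof.
  revert l'; induction l; destruct l'; simpl; intros; auto.
  apply andb_prop in H0 as [-> H0]. simpl. apply IHl; auto.
Qed.

Lemma submult : submultiplicative op w.
Proof.
  intros x y. pose proof (w_ge1 x); pose proof (w_ge1 y).
  destruct x as [a|], y as [b|]; simpl in *; try nra.
  destruct (Nat.eqb_spec (length a) (length b)); simpl; [|nra].
  destruct (allt a) eqn:Ea.
  { rewrite allt_orl by auto. lra. }
  destruct (allt b) eqn:Eb.
  { rewrite orl_comm, allt_orl by auto. lra. }
  destruct (allt (orl a b)); try nra.
  pose proof (cnt_orl a b) as H1. apply le_INR in H1. rewrite plus_INR in H1.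
  pose proof (pos_INR (cnt a)); pose proof (pos_INR (cnt b)). nra.
Qed.


Section K.
Variable k : nat.

Definition E : list T := map Some (all_lists k).
Definition eb (x : T) : bool :=
  match x with Some l => andb (Nat.eqb (length l) k) (negb (allt l)) | None => false end.
Definition ec (x : T) : CC := if eb x then (1, 0) else (0, 0).
Definition psi (a : T -> CC) : CC := Csum (fun t => Cmul (ec t) (a t)) E.

Lemma E_nodup : NoDup E.
Proof. apply NoDup_map_inj. intros a b H; inversion H; auto. apply all_lists_nodup. Qed.

Lemma E_in l : length l = k -> In (Some l) E.
Proof. intros; apply in_map, all_lists_in; auto. Qed.

Lemma E_in_inv x : In x E -> exists l, x = Some l /\ length l = k.
Proof. intros H. apply in_map_iff in H as [l [<- H]]. exists l; split; auto. apply all_lists_len; auto. Qed.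

Lemma eb_E x : eb x = true -> In x E.
Proof.
  destruct x as [l|]; simpl; [|discriminate]. intros H. apply andb_prop in H as [H _].
  apply E_in. apply Nat.eqb_eq; auto.
Qed.

Lemma ec_norm x : Cnorm (ec x) <= 1.
Proof. unfold ec; destruct (eb x); rewrite Cnorm_real; rewrite ?Rabs_R1, ?Rabs_R0; lra. Qed.

Lemma wsum_rsum (a : T -> CC) L : wsum w a L = rsum (fun t => Cnorm (a t) * w t) L.
Proof. reflexivity. Qed.

Lemma psi_bdd : is_bdd_linear w psi.
Proof.
  split; [|split].
  - intros a b _ _. unfold psi, fadd. rewrite <- Csum_add. apply Csum_ext. intros; cring.
  - intros l a _. unfold psi, fscale. rewrite <- Csum_scale. apply Csum_ext. intros; cring.
  - exists 1. intros a r _ Hr. specialize (Hr E E_nodup). rewrite wsum_rsum in Hr.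
    eapply Rle_trans. apply Cnorm_Csum. rewrite Rmult_1_l. eapply Rle_trans; [|exact Hr].
    apply rsum_le. intros x _. rewrite Cnorm_mul. pose proof (ec_norm x).
    pose proof (Cnorm_ge0 (a x)). pose proof (Cnorm_ge0 (ec x)). pose proof (w_ge1 x). nra.
Qed.
End K.


Section Build.
Variable t : T.
Definition ST := {p : T * T | op (fst p) (snd p) = t}.
Fixpoint build (P : list (T * T)) : list ST :=
  match P with
  | [] => []
  | p :: P' => match T_dec (op (fst p) (snd p)) t with
               | left H => exist _ p H :: build P'
               | right _ => build P' end end.

Lemma build_in P (q : ST) : In (proj1_sig q) P -> In q (build P).
Proof.
  induction P as [|p P IH]; simpl; [tauto|]. intros [Hp|H].
  - subst p. destruct (T_dec _ _) as [H|H]. left. destruct q; simpl; f_equal; apply proof_irrelevance.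
    destruct q; simpl in *; contradiction.
  - destruct (T_dec _ _); [right|]; auto.
Qed.

Lemma build_in_inv P (q : ST) : In q (build P) -> In (proj1_sig q) P.
Proof.
  induction P as [|p P IH]; simpl; [tauto|]. destruct (T_dec _ _) as [H|H].
  - intros [<-|Hq]; simpl; auto.
  - auto.
Qed.

Lemma build_nodup P : NoDup P -> NoDup (build P).
Proof.
  induction 1 as [|p P Hp HP IH]; simpl. constructor.
  destruct (T_dec _ _); auto. constructor; auto.
  intros Hin. apply build_in_inv in Hin. simpl in Hin. contradiction.
Qed.

Lemma build_sum (G : T * T -> CC) P :
  Csum (fun q : ST => G (proj1_sig q)) (build P) =
  Csum (fun p => if T_dec (op (fst p) (snd p)) t then G p else C0) P.
Proof.
  induction P as [|p P IH]; simpl; auto.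
  destruct (T_dec _ _); simpl; rewrite IH; auto. cring.
Qed.
End Build.

Lemma op_some x y l : op x y = Some l ->
  exists l1 l2, x = Some l1 /\ y = Some l2 /\ length l1 = length l /\ length l2 = length l.
Proof.
  destruct x as [a|], y as [b|]; simpl; try discriminate.
  destruct (Nat.eqb_spec (length a) (length b)); try discriminate. intros H; inversion H; subst.
  exists a, b. rewrite orl_len; auto.
Qed.

Definition PP k := list_prod (E k) (E k).

Lemma conv_val k a b c t : conv_rel op a b c -> In t (E k) ->
  c t = Csum (fun p => if T_dec (op (fst p) (snd p)) t then Cmul (a (fst p)) (b (snd p)) else C0) (PP k).
Proof.
  intros Hc Ht. specialize (Hc t). symmetry.
  rewrite <- (build_sum t (fun p => Cmul (a (fst p)) (b (snd p)))).
  apply has_sum_finite; auto.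
  - apply build_nodup, NoDup_prod; apply E_nodup.
  - intros q. apply build_in. destruct q as [[x y] Hq]; simpl in *.
    apply E_in_inv in Ht as [l [-> Hl]]. apply op_some in Hq as [l1 [l2 [-> [-> [H1 H2]]]]].
    apply in_prod; apply E_in; lia.
Qed.

Lemma psi_conv k a b c : conv_rel op a b c ->
  psi k c = Csum (fun p => Cmul (ec k (op (fst p) (snd p))) (Cmul (a (fst p)) (b (snd p)))) (PP k).
Proof.
  intros Hc. unfold psi.
  rewrite (Csum_ext _ (fun t => Csum (fun p => Cmul (ec k t)
     (if T_dec (op (fst p) (snd p)) t then Cmul (a (fst p)) (b (snd p)) else C0)) (PP k))).
  2:{ intros t Ht. rewrite (conv_val k a b c t Hc Ht). rewrite Csum_scale. auto. }
  rewrite Csum_swap. apply Csum_ext. intros p _.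
  destruct (in_dec T_dec (op (fst p) (snd p)) (E k)) as [Hin|Hin].
  - rewrite (Csum_single _ _ (op (fst p) (snd p))); auto.
    + destruct (T_dec _ _); [auto|congruence].
    + apply E_nodup.
    + intros x _ Hx. destruct (T_dec _ _); [congruence|]. cring.
  - rewrite Csum_zero.
    + unfold ec. destruct (eb k _) eqn:He. apply eb_E in He; contradiction. cring.
    + intros x Hx. destruct (T_dec _ _); [subst; contradiction|]. cring.
Qed.


Lemma allt_cnt l : allt l = true -> cnt l = length l.
Proof. induction l; simpl; auto. intros H; apply andb_prop in H as [-> H]. simpl; auto. Qed.

Lemma Cnorm_C0 : Cnorm C0 = 0.
Proof. unfold C0. rewrite Cnorm_real, Rabs_R0; auto. Qed.

Lemma D_bound k d x y : In x (E k) -> In y (E k) -> 0 < d -> 1 <= d * (INR k + 1) ->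
  Cnorm (Csub (ec k (op x y)) (Cmul (ec k x) (ec k y))) <= d * (w x * w y).
Proof.
  intros Hx Hy Hd Hk. pose proof (w_ge1 x); pose proof (w_ge1 y).
  apply E_in_inv in Hx as [l1 [-> H1]]. apply E_in_inv in Hy as [l2 [-> H2]].
  assert (Hz : forall z, z = C0 -> Cnorm z <= d * (w (Some l1) * w (Some l2))).
  { intros z ->. rewrite Cnorm_C0. apply Rmult_le_pos; [lra|]. apply Rmult_le_pos; lra. }
  set (W := d * (w (Some l1) * w (Some l2))) in *.
  unfold op. rewrite H1, H2, Nat.eqb_refl. unfold ec, eb.
  rewrite orl_len by congruence. rewrite H1, H2, Nat.eqb_refl. simpl.
  destruct (allt l1) eqn:E1.
  { rewrite allt_orl by congruence. simpl. apply Hz. cring. }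
  destruct (allt l2) eqn:E2.
  { rewrite orl_comm, allt_orl by congruence. simpl. apply Hz. cring. }
  destruct (allt (orl l1 l2)) eqn:E3; simpl.
  - replace (Csub (0, 0) (Cmul (1, 0) (1, 0))) with ((Ropp 1, 0) : CC) by cring.
    rewrite Cnorm_real. rewrite Rabs_Ropp, Rabs_R1. unfold W; simpl. rewrite E1, E2.
    apply allt_cnt in E3. rewrite orl_len in E3 by congruence.
    pose proof (cnt_orl l1 l2) as Hc. rewrite E3, H1 in Hc. apply le_INR in Hc. rewrite plus_INR in Hc.
    pose proof (pos_INR (cnt l1)); pose proof (pos_INR (cnt l2)).
    assert (INR k + 1 <= (1 + INR (cnt l1)) * (1 + INR (cnt l2))) by nra. nra.
  - apply Hz. cring.
Qed.

Lemma psi_defect k d : 0 < d -> 1 <= d * (INR k + 1) -> defect_le op w (psi k) d.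
Proof.
  intros Hd Hk a b c _ _ Na Nb Hc.
  rewrite (psi_conv k a b c Hc). unfold psi. rewrite Csum_prod. fold (PP k).
  rewrite <- Csum_sub. eapply Rle_trans. apply Cnorm_Csum.
  specialize (Na (E k) (E_nodup k)). specialize (Nb (E k) (E_nodup k)).
  rewrite wsum_rsum in Na, Nb.
  assert (Ha0 : 0 <= rsum (fun t => Cnorm (a t) * w t) (E k)).
  { apply rsum_ge0; intros; pose proof (Cnorm_ge0 (a x)); pose proof (w_ge1 x); nra. }
  assert (Hb0 : 0 <= rsum (fun t => Cnorm (b t) * w t) (E k)).
  { apply rsum_ge0; intros; pose proof (Cnorm_ge0 (b x)); pose proof (w_ge1 x); nra. }
  apply Rle_trans with (d * (rsum (fun t => Cnorm (a t) * w t) (E k) * rsum (fun t => Cnorm (b t) * w t) (E k))).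
  2:{ assert (rsum (fun t => Cnorm (a t) * w t) (E k) * rsum (fun t => Cnorm (b t) * w t) (E k) <= 1) by nra. nra. }
  rewrite rsum_prod, <- rsum_scale. apply rsum_le. intros [x y] Hp. simpl.
  apply in_prod_iff in Hp as [Hx Hy].
  replace (Csub (Cmul (ec k (op x y)) (Cmul (a x) (b y))) (Cmul (Cmul (ec k x) (a x)) (Cmul (ec k y) (b y))))
    with (Cmul (Cmul (a x) (b y)) (Csub (ec k (op x y)) (Cmul (ec k x) (ec k y)))) by cring.
  rewrite !Cnorm_mul. pose proof (D_bound k d x y Hx Hy Hd Hk).
  pose proof (Cnorm_ge0 (a x)); pose proof (Cnorm_ge0 (b y)).
  assert (0 <= Cnorm (a x) * Cnorm (b y)) by nra.
  apply Rle_trans with (Cnorm (a x) * Cnorm (b y) * (d * (w x * w y))).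
  apply Rmult_le_compat_l; auto. lra.
Qed.


Definition dl (x : T) : T -> CC := fun t => if T_dec t x then ((1, 0) : CC) else C0.

Lemma rsum_zero {I} (f : I -> R) L : (forall x, In x L -> f x = 0) -> rsum f L = 0.
Proof. induction L; simpl; intros H; auto. rewrite H, IHL; auto. lra. Qed.

Lemma rsum_single {I} (f : I -> R) L s : NoDup L -> (forall x, x <> s -> f x = 0) -> 0 <= f s ->
  rsum f L <= f s.
Proof.
  induction 1 as [|a L Ha HL IH]; simpl; intros H0 Hs. lra.
  destruct (classic (a = s)) as [->|Hne].
  - rewrite rsum_zero. lra. intros x Hx. apply H0. intro; subst; contradiction.
  - rewrite H0; auto. specialize (IH H0 Hs). lra.
Qed.

Lemma norm_single (a : T -> CC) x : (forall t, t <> x -> a t = C0) -> norm_le w a (Cnorm (a x) * w x).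
Proof.
  intros H L HL. rewrite wsum_rsum. apply (rsum_single (fun t => Cnorm (a t) * w t)); auto.
  - intros t Ht. rewrite H; auto. rewrite Cnorm_C0; lra.
  - pose proof (Cnorm_ge0 (a x)); pose proof (w_ge1 x); nra.
Qed.

Lemma dl_l1 x : in_l1w w (dl x).
Proof. exists (Cnorm (dl x x) * w x). apply norm_single. intros t Ht. unfold dl. destruct (T_dec t x); [contradiction|auto]. Qed.

Lemma conv_dl x y : conv_rel op (dl x) (dl y) (dl (op x y)).
Proof.
  intros t e He. unfold dl at 3. destruct (T_dec t (op x y)) as [Ht|Ht].
  - subst t. exists [exist (fun p : T * T => op (fst p) (snd p) = op x y) (x, y) eq_refl].
    intros L HL Hinc.
    rewrite (Csum_single _ L (exist (fun p : T * T => op (fst p) (snd p) = op x y) (x, y) eq_refl)); auto.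
    + simpl. unfold dl. destruct (T_dec x x); [|congruence]. destruct (T_dec y y); [|congruence].
      replace (Csub (Cmul (1, 0) (1, 0)) (1, 0)) with C0 by cring. rewrite Cnorm_C0; auto.
    + apply Hinc; left; auto.
    + intros [[u v] Hq] _ Hne. simpl. unfold dl.
      destruct (T_dec u x); destruct (T_dec v y); try cring. subst.
      exfalso; apply Hne. f_equal. apply proof_irrelevance.
  - exists []. intros L _ _. rewrite Csum_zero.
    + replace (Csub C0 C0) with C0 by cring. rewrite Cnorm_C0; auto.
    + intros [[u v] Hq] _. simpl in *. unfold dl.
      destruct (T_dec u x); destruct (T_dec v y); try cring. subst. contradiction.
Qed.

Lemma C_idem (z : CC) : z = Cmul z z -> z = (0, 0) \/ z = (1, 0).
Proof.
  destruct z as [a b]. unfold Cmul; simpl. intros H. apply pair_equal_spec in H as [H1 H2].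
  assert (b = 0).
  { destruct (Req_dec b 0) as [|Hb]; auto. assert (Ha : a = /2).
    { apply Rmult_eq_reg_l with b; auto. apply Rmult_eq_reg_l with 2; [|lra].
      field_simplify. lra. }
    subst a. exfalso. assert (b * b = -/4) by nra. nra. }
  subst. assert (a * a = a) by lra. destruct (Req_dec a 0); [left|right]; subst; auto.
  f_equal. apply Rmult_eq_reg_l with a; auto; lra.
Qed.

Lemma phi_mult phi x y : is_mult op w phi -> phi (dl (op x y)) = Cmul (phi (dl x)) (phi (dl y)).
Proof. intros [_ H]. apply H; auto using dl_l1, conv_dl. Qed.

Lemma phi_idem phi x : is_mult op w phi -> phi (dl x) = (0, 0) \/ phi (dl x) = (1, 0).
Proof. intros H. apply C_idem. rewrite <- (phi_mult phi x x H), op_idem; auto. Qed.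

Lemma phi_val k phi t : is_mult op w phi -> opnorm_diff_le w (psi k) phi (1/8 + 1/8) ->
  In t (E k) -> w t <= 2 -> phi (dl t) = ec k t.
Proof.
  intros Hm Hd Ht Hw.
  set (a := fscale ((/2, 0) : CC) (dl t)).
  assert (Ha0 : forall u, u <> t -> a u = C0).
  { intros u Hu. unfold a, fscale, dl. destruct (T_dec u t); [contradiction|]. cring. }
  assert (Hat : a t = ((/2, 0) : CC)).
  { unfold a, fscale, dl. destruct (T_dec t t); [|congruence]. cring. }
  assert (Hn : norm_le w a 1).
  { intros L HL. eapply Rle_trans. apply (norm_single a t Ha0); auto.
    rewrite Hat, Cnorm_real, Rabs_right; lra. }
  assert (Hl : in_l1w w a) by (exists 1; auto).
  specialize (Hd a Hl Hn).
  assert (Hpa : psi k a = Cmul (ec k t) ((/2, 0) : CC)).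
  { unfold psi. rewrite (Csum_single _ _ t); auto. rewrite Hat; auto. apply E_nodup.
    intros x _ Hx. rewrite Ha0; auto. cring. }
  assert (Hpb : phi a = Cmul ((/2, 0) : CC) (phi (dl t))).
  { destruct Hm as [[_ [Hs _]] _]. unfold a. apply Hs, dl_l1. }
  rewrite Hpa, Hpb in Hd.
  assert (He : ec k t = (0, 0) \/ ec k t = (1, 0)) by (unfold ec; destruct (eb k t); auto).
  destruct (phi_idem phi t Hm) as [Hp|Hp]; rewrite Hp in *; destruct He as [He|He]; rewrite He in *; auto;
  exfalso.
  - replace (Csub (Cmul (1, 0) (/ 2, 0)) (Cmul (/ 2, 0) (0, 0))) with ((/2, 0) : CC) in Hd by cring.
    rewrite Cnorm_real, Rabs_right in Hd; lra.
  - replace (Csub (Cmul (0, 0) (/ 2, 0)) (Cmul (/ 2, 0) (1, 0))) with ((Ropp (/2), 0) : CC) in Hd by cring.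
    rewrite Cnorm_real, Rabs_Ropp, Rabs_right in Hd; lra.
Qed.


Lemma orl_prefix j X Y : orl (repeat true j ++ X) (repeat false j ++ Y) = repeat true j ++ orl X Y.
Proof. induction j; simpl; auto. rewrite IHj; auto. Qed.

Lemma rep_true_snoc j l : repeat true j ++ true :: l = repeat true (S j) ++ l.
Proof. induction j; simpl; auto. rewrite IHj; auto. Qed.

Lemma cnt_app l1 l2 : cnt (l1 ++ l2) = (cnt l1 + cnt l2)%nat.
Proof. induction l1; simpl; auto. rewrite IHl1; lia. Qed.

Lemma cnt_rf n : cnt (repeat false n) = 0%nat.
Proof. induction n; simpl; auto. Qed.

Lemma allt_rt n : allt (repeat true n) = true.
Proof. induction n; simpl; auto. Qed.

Section Chain.
Variable k : nat.
Hypothesis Hk : (2 <= k)%nat.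

Definition pj j : T := Some (repeat true j ++ repeat false (k - j)).
Definition ej j : T := Some (repeat false j ++ true :: repeat false (k - S j)).
Definition top : T := Some (repeat true k).

Lemma ej_len j : (j < k)%nat -> length (repeat false j ++ true :: repeat false (k - S j)) = k.
Proof. intros. rewrite length_app; simpl; rewrite !repeat_length. lia. Qed.

Lemma pj_len j : (j <= k)%nat -> length (repeat true j ++ repeat false (k - j)) = k.
Proof. intros. rewrite length_app; rewrite !repeat_length. lia. Qed.

Lemma ej_allt j : (j < k)%nat -> allt (repeat false j ++ true :: repeat false (k - S j)) = false.
Proof.
  intros Hj. destruct j; simpl; auto.
  replace (k - 1)%nat with (S (k - 2)) by lia. simpl. auto.
Qed.

Lemma ej_E j : (j < k)%nat -> In (ej j) (E k).
Proof. intros; apply E_in, ej_len; auto. Qed.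

Lemma ej_w j : (j < k)%nat -> w (ej j) <= 2.
Proof.
  intros Hj. unfold ej, w. rewrite ej_allt by auto. rewrite cnt_app, cnt_rf. simpl.
  rewrite cnt_rf. simpl. lra.
Qed.

Lemma ej_ec j : (j < k)%nat -> ec k (ej j) = (1, 0).
Proof. intros Hj. unfold ec, eb, ej. rewrite ej_len, Nat.eqb_refl, ej_allt by auto. auto. Qed.

Lemma top_E : In top (E k).
Proof. apply E_in, repeat_length. Qed.

Lemma top_w : w top <= 2.
Proof. unfold top, w. rewrite allt_rt. lra. Qed.

Lemma top_ec : ec k top = (0, 0).
Proof. unfold ec, eb, top. rewrite allt_rt. simpl. rewrite Bool.andb_false_r. auto. Qed.

Lemma op_pj j : (j < k)%nat -> op (pj j) (ej j) = pj (S j).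
Proof.
  intros Hj. unfold op, pj, ej. rewrite pj_len, ej_len by lia. rewrite Nat.eqb_refl. f_equal.
  replace (k - j)%nat with (S (k - S j)) by lia. rewrite orl_prefix. simpl. rewrite orl_idem.
  apply rep_true_snoc.
Qed.

Lemma pj1 : pj 1 = ej 0.
Proof. reflexivity. Qed.

Lemma pjk : pj k = top.
Proof. unfold pj, top. rewrite Nat.sub_diag. simpl. rewrite app_nil_r. auto. Qed.

Lemma chain_false phi : is_mult op w phi -> opnorm_diff_le w (psi k) phi (1/8 + 1/8) -> False.
Proof.
  intros Hm Hd.
  assert (He : forall j, (j < k)%nat -> phi (dl (ej j)) = (1, 0)).
  { intros j Hj. rewrite (phi_val k phi); auto using ej_E, ej_w, ej_ec. }
  assert (Hp : forall j, (1 <= j <= k)%nat -> phi (dl (pj j)) = (1, 0)).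
  { induction j; intros Hj. lia.
    destruct (Nat.eq_dec j 0) as [->|Hj0]. rewrite pj1; apply He; lia.
    rewrite <- op_pj by lia. rewrite phi_mult by auto. rewrite IHj, He by lia. cring. }
  pose proof (Hp k ltac:(lia)) as H1. rewrite pjk in H1.
  rewrite (phi_val k phi top Hm Hd top_E top_w), top_ec in H1.
  apply pair_equal_spec in H1 as [H1 _]. lra.
Qed.
End Chain.

Theorem theoremt :
  exists (T : Type) (op : T -> T -> T) (w : T -> R),
    is_semilattice op /\ locally_finite op /\
    is_weight w /\ submultiplicative op w /\
    ~ AMNM op w.
Proof.
  exists T, op, w. split; [split; [|split]|split; [|split; [|split]]].
  - intros; apply op_assoc.
  - apply op_comm.
  - apply op_idem.
  - apply locfin.
  - intros t. pose proof (w_ge1 t); lra.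
  - apply submult.
  - intros H. destruct (H (1/8)) as [d [Hd Hpsi]]; [lra|].
    destruct (INR_unbounded (/ d)) as [n Hn].
    set (k := (n + 2)%nat).
    assert (Hk : 1 <= d * (INR k + 1)).
    { unfold k. rewrite plus_INR. simpl. pose proof (pos_INR n).
      assert (d * INR n > d * / d) by (apply Rmult_gt_compat_l; auto).
      rewrite Rinv_r in H1 by lra. nra. }
    destruct (Hpsi (psi k) (psi_bdd k) (psi_defect k d Hd Hk) (1/8)) as [phi [Hm Hn']]; [lra|].
    apply (chain_false k ltac:(unfold k; lia) phi Hm Hn').
Qed.
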